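(* Let $k_{11}>0$, $k_{22}>0$, $\mathbf{K}=\mathrm{diag}(k_{11},k_{22})$, $\mathbf{N}=\begin{pmatrix}0&\nu\\-\nu&0\end{pmatrix}$ with $\nu\in\mathbb{R}$, and let $\mathbf{D}'=\begin{pmatrix} d'_{11}&d'_{12}\\ d'_{12}&d'_{22}\end{pmatrix}$ be real symmetric positive definite. For $\varepsilon>0$ let $\nu^2_{\varepsilon}$ denote the supremum of those $\nu^2$ for which all roots of $\det(\lambda^2\mathbf{I}+\varepsilon\lambda\mathbf{D}'+\mathbf{K}+\mathbf{N})=0$ have negative real parts. Then: (i) $\lim_{\varepsilon\to0^+}\nu^2_\varepsilon=\nu_{cr}^2:=\dfrac{(k_{11}-k_{22})^2}{4}-\dfrac{(d'_{11}-d'_{22})^2(k_{11}-k_{22})^2}{4(d'_{11}+d'_{22})^2}$; (ii) in the undamped case, all roots of $\det(\lambda^2\mathbf{I}+\mathbf{K}+\mathbf{N})=0$ are purely imaginary and simple if and only if $\nu^2<\nu_0^2:=\dfrac{(k_{11}-k_{22})^2}{4}=\left(\dfrac{\mathrm{tr}\,\mathbf{K}}{2}\right)^2-\det\mathbf{K}$; (iii) $\nu_0^2-\nu_{cr}^2=\left[\dfrac{2\,\mathrm{tr}(\mathbf{K}\mathbf{D}')-\mathrm{tr}\,\mathbf{K}\,\mathrm{tr}\,\mathbf{D}'}{2\,\mathrm{tr}\,\mathbf{D}'}\right]^2\ge0$.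
   Context: $\mathbf{I}$ denotes the $2\times2$ identity matrix; $\mathrm{tr}$ denotes the trace. *)

(* Defs.v *)
From Stdlib Require Import Reals List.
Import ListNotations.
Open Scope R_scope.

Record Cplx := mkC { re : R; im : R }.
Definition C0 : Cplx := mkC 0 0.
Definition Cofr (a : R) : Cplx := mkC a 0.
Definition Cadd (z w : Cplx) : Cplx := mkC (re z + re w) (im z + im w).
Definition Cmul (z w : Cplx) : Cplx :=
  mkC (re z * re w - im z * im w) (re z * im w + im z * re w).

(* Real-coefficient polynomials: [a0; a1; ...; an] = a0 + a1 X + ... + an X^n *)
Definition poly := list R.

Fixpoint padd (p q : poly) : poly :=
  match p, q with
  | [], _ => q
  | _, [] => p
  | a :: p', b :: q' => (a + b) :: padd p' q'
  end.
Definition pscale (c : R) (p : poly) : poly := map (fun a => c * a) p.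
Definition psub (p q : poly) : poly := padd p (pscale (-1) q).
Fixpoint pmul (p q : poly) : poly :=
  match p with
  | [] => []
  | a :: p' => padd (pscale a q) (0 :: pmul p' q)
  end.
Fixpoint pderiv_aux (n : nat) (p : poly) : poly :=
  match p with
  | [] => []
  | a :: p' => (INR n * a) :: pderiv_aux (S n) p'
  end.
Definition pderiv (p : poly) : poly :=
  match p with [] => [] | _ :: p' => pderiv_aux 1 p' end.
Definition peval (p : poly) (z : Cplx) : Cplx :=
  fold_right (fun a acc => Cadd (Cofr a) (Cmul z acc)) C0 p.

Record Mat2 := mkM { m11 : R; m12 : R; m21 : R; m22 : R }.
Definition I2 : Mat2 := mkM 1 0 0 1.
Definition Madd (A B : Mat2) : Mat2 :=
  mkM (m11 A + m11 B) (m12 A + m12 B) (m21 A + m21 B) (m22 A + m22 B).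
Definition Mscale (c : R) (A : Mat2) : Mat2 :=
  mkM (c * m11 A) (c * m12 A) (c * m21 A) (c * m22 A).
Definition Mmul (A B : Mat2) : Mat2 :=
  mkM (m11 A * m11 B + m12 A * m21 B) (m11 A * m12 B + m12 A * m22 B)
      (m21 A * m11 B + m22 A * m21 B) (m21 A * m12 B + m22 A * m22 B).
Definition tr2 (A : Mat2) : R := m11 A + m22 A.
Definition det2 (A : Mat2) : R := m11 A * m22 A - m12 A * m21 A.

Definition sym_pos_def (A : Mat2) : Prop :=
  m12 A = m21 A /\
  forall x y : R, (x <> 0 \/ y <> 0) ->
    0 < x * (m11 A * x + m12 A * y) + y * (m21 A * x + m22 A * y).

(* det(λ^2 M2 + λ M1 + M0) as a polynomial in λ *)
Definition qentry (a2 a1 a0 : R) : poly := [a0; a1; a2].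
Definition det_quad (M2 M1 M0 : Mat2) : poly :=
  psub (pmul (qentry (m11 M2) (m11 M1) (m11 M0)) (qentry (m22 M2) (m22 M1) (m22 M0)))
       (pmul (qentry (m12 M2) (m12 M1) (m12 M0)) (qentry (m21 M2) (m21 M1) (m21 M0))).

Definition Kmat (k11 k22 : R) : Mat2 := mkM k11 0 0 k22.
Definition Nmat (nu : R) : Mat2 := mkM 0 nu (- nu) 0.

Definition charpoly (eps : R) (D K : Mat2) (nu : R) : poly :=
  det_quad I2 (Mscale eps D) (Madd K (Nmat nu)).

Definition all_roots_stable (p : poly) : Prop :=
  forall z : Cplx, peval p z = C0 -> re z < 0.

Definition stab_set (eps : R) (D K : Mat2) : R -> Prop :=
  fun s => exists nu : R, s = nu ^ 2 /\ all_roots_stable (charpoly eps D K nu).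

(* Main.v *)
Require Import Defs.
From Stdlib Require Import Reals List Lra Psatz.
Import ListNotations.
Open Scope R_scope.


Lemma dep_fact (c d e : R) : exists P Q S, Q + S - P^2 = c /\ P*(S-Q) = d /\ Q*S = e.
Proof.
  destruct (Req_dec d 0) as [Hd|Hd].
  - subst d. destruct (Rle_dec 0 (c^2 - 4*e)) as [H|H].
    + exists 0, ((c - sqrt (c^2-4*e))/2), ((c + sqrt (c^2-4*e))/2).
      pose proof (sqrt_sqrt _ H). split; [|split]; nra.
    + assert (He : 0 < e) by nra.
      pose proof (sqrt_sqrt _ (Rlt_le _ _ He)) as Hs.
      pose proof (sqrt_pos e).
      assert (Hp : 0 <= 2*sqrt e - c) by nra.
      pose proof (sqrt_sqrt _ Hp).
      exists (sqrt (2*sqrt e - c)), (sqrt e), (sqrt e). split; [|split]; nra.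
  - set (f := fun X => X*(c+X)^2 - d^2 - 4*e*X).
    set (M := 1 + Rabs c + Rabs d + 4*Rabs e).
    assert (Hc: continuity f) by (unfold f; reg).
    assert (HM : 0 < M) by (unfold M; pose proof (Rabs_pos c); pose proof (Rabs_pos d); pose proof (Rabs_pos e); lra).
    assert (f0 : f 0 < 0) by (unfold f; nra).
    assert (fM : 0 < f M).
    { unfold f, M. pose proof (Rabs_pos c). pose proof (Rabs_pos d). pose proof (Rabs_pos e).
      pose proof (Rle_abs c). pose proof (Rle_abs (-c)). rewrite Rabs_Ropp in *.
      pose proof (Rle_abs (-e)). rewrite Rabs_Ropp in *.
      assert (d^2 = Rabs d * Rabs d) by (rewrite <- Rabs_mult; simpl; rewrite Rmult_1_r; symmetry; apply Rabs_pos_eq; nra).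
      set (A := 1 + Rabs c + Rabs d + 4 * Rabs e) in *.
      assert (h1: 1 + Rabs d + 4*Rabs e <= c + A) by (unfold A; lra).
      assert (h2: (1 + Rabs d + 4*Rabs e) <= (c+A)^2) by nra.
      assert (h3: A * (1 + Rabs d + 4*Rabs e) <= A*(c+A)^2). { apply Rmult_le_compat_l. unfold A; lra. exact h2. }
      assert (h4: Rabs d * Rabs d <= A * Rabs d) by (apply Rmult_le_compat_r; unfold A; lra).
      assert (h5: e * A <= Rabs e * A). { apply Rmult_le_compat_r. unfold A; lra. apply Rle_abs. }
      nra. }
    destruct (IVT f 0 M Hc HM f0 fM) as [X [[HX1 HX2] HX]].
    unfold f in HX.
    assert (HX0 : 0 < X). { destruct HX1 as [h|h]; auto. subst X. exfalso. apply Hd. nra. }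
    pose proof (sqrt_sqrt _ (Rlt_le _ _ HX0)) as Hs.
    pose proof (sqrt_lt_R0 _ HX0) as Hsp.
    exists (sqrt X), ((c + X - d/sqrt X)/2), ((c+X+d/sqrt X)/2).
    split; [|split].
    + simpl. nra.
    + field. lra.
    + assert (E: (c + X - d / sqrt X) / 2 * ((c + X + d / sqrt X) / 2) = ((c+X)^2 - d^2/X)/4).
      { replace (d^2/X) with (d^2/(sqrt X * sqrt X)) by (rewrite Hs; reflexivity). field. lra. }
      rewrite E. apply (Rmult_eq_reg_l (4*X)); [|lra]. field_simplify; [|lra]. nra.
Qed.

Lemma quart_fact (a3 a2 a1 a0 : R) : exists p q r s,
  p + r = a3 /\ q + s + p*r = a2 /\ p*s + q*r = a1 /\ q*s = a0.
Proof.
  set (h := a3/4).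
  destruct (dep_fact (a2 - 3*a3^2/8) (a1 - a2*a3/2 + a3^3/8)
     (a0 - a1*a3/4 + a2*a3^2/16 - 3*a3^4/256)) as [P [Q [S [H1 [H2 H3]]]]].
  exists (2*h+P), (h^2+P*h+Q), (2*h-P), (h^2-P*h+S).
  split; [|split; [|split]].
  - unfold h; lra.
  - replace (h ^ 2 + P * h + Q + (h ^ 2 - P * h + S) + (2 * h + P) * (2 * h - P))
      with (6*h^2 + (Q+S-P^2)) by ring. rewrite H1. unfold h. field.
  - replace ((2 * h + P) * (h ^ 2 - P * h + S) + (h ^ 2 + P * h + Q) * (2 * h - P))
      with (4*h^3 + 2*h*(Q+S-P^2) + P*(S-Q)) by ring. rewrite H1, H2. unfold h. field.
  - replace ((h ^ 2 + P * h + Q) * (h ^ 2 - P * h + S))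
      with (h^4 + h^2*(Q+S-P^2) + h*(P*(S-Q)) + Q*S) by ring. rewrite H1, H2, H3. unfold h. field.
Qed.

Definition quadC (p q : R) (z : Cplx) : Cplx :=
  mkC (re z * re z - im z * im z + p * re z + q) (2 * re z * im z + p * im z).

Lemma peval_fact (p q r s : R) (z : Cplx) :
  peval [q*s; p*s+q*r; q+s+p*r; p+r; 1] z = Cmul (quadC p q z) (quadC r s z).
Proof. destruct z as [x y]. unfold peval, quadC, Cmul, Cadd, Cofr, C0; simpl. f_equal; ring. Qed.

Lemma Cmul_eq0 (u w : Cplx) : Cmul u w = C0 -> u = C0 \/ w = C0.
Proof.
  destruct u as [a b], w as [c d]. unfold Cmul, C0; simpl. intro H. injection H as H1 H2.
  assert (E: (a*a+b*b)*(c*c+d*d) = 0) by nra.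
  apply Rmult_integral in E. destruct E as [E|E].
  - left. f_equal; nra.
  - right. f_equal; nra.
Qed.

Lemma quad_stable (p q : R) (z : Cplx) : 0 < p -> 0 < q -> quadC p q z = C0 -> re z < 0.
Proof.
  destruct z as [x y]; unfold quadC, C0; simpl. intros Hp Hq H. injection H as H1 H2.
  assert (E: y * (2*x+p) = 0) by lra. apply Rmult_integral in E. destruct E as [E|E].
  - subst y. nra.
  - lra.
Qed.

Lemma quad_root (p q : R) : p <= 0 \/ q <= 0 -> exists z, quadC p q z = C0 /\ 0 <= re z /\ (p < 0 -> 0 < re z).
Proof.
  intro H. destruct (Rle_dec 0 (p^2 - 4*q)) as [Hd|Hd].
  - pose proof (sqrt_sqrt _ Hd). pose proof (sqrt_pos (p^2-4*q)).
    set (s := sqrt (p^2-4*q)) in *. clearbody s.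
    assert (p <= s). { destruct H. lra. nra. }
    exists (mkC ((- p + s)/2) 0). unfold quadC, C0; simpl. split; [f_equal; nra|].
    split; intros; lra.
  - assert (Hd' : 0 <= -(p^2 - 4*q)) by lra.
    pose proof (sqrt_sqrt _ Hd').
    set (s := sqrt (-(p^2-4*q))) in *. clearbody s.
    exists (mkC (-p/2) (s/2)). unfold quadC, C0; simpl. split; [f_equal; nra|].
    assert (p <= 0) by (destruct H; nra). split; intros; lra.
Qed.

Lemma stable_iff p q r s : all_roots_stable [q*s; p*s+q*r; q+s+p*r; p+r; 1] <-> (0<p/\0<q/\0<r/\0<s).
Proof.
  unfold all_roots_stable. split.
  - intros H.
    destruct (Rlt_dec 0 p) as [Hp|Hp]; destruct (Rlt_dec 0 q) as [Hq|Hq];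
    destruct (Rlt_dec 0 r) as [Hr|Hr]; destruct (Rlt_dec 0 s) as [Hs|Hs];
    try (repeat split; assumption);
    solve [
      (destruct (quad_root p q) as [z [Hz1 [Hz2 _]]]; [lra|];
       specialize (H z); rewrite peval_fact, Hz1 in H;
       assert (re z < 0) by (apply H; destruct z; unfold Cmul, C0; simpl; f_equal; ring); lra)
    | (destruct (quad_root r s) as [z [Hz1 [Hz2 _]]]; [lra|];
       specialize (H z); rewrite peval_fact, Hz1 in H;
       assert (re z < 0) by (apply H; destruct (quadC p q z); unfold Cmul, C0; simpl; f_equal; ring); lra)].
  - intros [Hp [Hq [Hr Hs]]] z Hz. rewrite peval_fact in Hz.
    apply Cmul_eq0 in Hz. destruct Hz as [Hz|Hz].
    + exact (quad_stable p q z Hp Hq Hz).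
    + exact (quad_stable r s z Hr Hs Hz).
Qed.

Lemma charpoly_eq eps d11 d12 d22 k11 k22 nu :
  charpoly eps (mkM d11 d12 d12 d22) (Kmat k11 k22) nu =
  [k11*k22+nu^2; eps*(d11*k22+d22*k11); k11+k22+eps^2*(d11*d22-d12^2); eps*(d11+d22); 1].
Proof.
  unfold charpoly, det_quad, psub, Madd, Mscale, Kmat, Nmat, I2, qentry; simpl.
  match goal with |- [?a0;?a1;?a2;?a3;?a4] = _ =>
    replace a0 with (k11*k22+nu^2) by ring; replace a1 with (eps*(d11*k22+d22*k11)) by ring;
    replace a2 with (k11+k22+eps^2*(d11*d22-d12^2)) by ring;
    replace a3 with (eps*(d11+d22)) by ring; replace a4 with 1 by ring end. reflexivity.
Qed.

Definition Bnd eps d11 d12 d22 k11 k22 :=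
  (k11-k22)^2*d11*d22/(d11+d22)^2 + eps^2*(d11*d22-d12^2)*(d11*k22+d22*k11)/(d11+d22).

Lemma stab_char eps d11 d12 d22 k11 k22 nu : 0<eps -> 0<k11 -> 0<k22 -> 0<d11 -> 0<d22 ->
  0<d11*d22-d12^2 ->
  all_roots_stable (charpoly eps (mkM d11 d12 d12 d22) (Kmat k11 k22) nu) <->
  nu^2 < Bnd eps d11 d12 d22 k11 k22.
Proof.
  intros He Hk1 Hk2 Hd1 Hd2 HD.
  rewrite charpoly_eq.
  set (a0 := k11*k22+nu^2). set (a1 := eps*(d11*k22+d22*k11)).
  set (a2 := k11+k22+eps^2*(d11*d22-d12^2)). set (a3 := eps*(d11+d22)).
  assert (Hid : a1*a2*a3 - a1^2 - a3^2*a0 = eps^2*(d11+d22)^2*(Bnd eps d11 d12 d22 k11 k22 - nu^2)).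
  { unfold a0,a1,a2,a3,Bnd. field. lra. }
  assert (Ha0 : 0 < a0) by (unfold a0; nra).
  assert (Ha1 : 0 < a1) by (unfold a1; apply Rmult_lt_0_compat; nra).
  assert (Ha3 : 0 < a3) by (unfold a3; apply Rmult_lt_0_compat; nra).
  assert (Hpos : 0 < eps^2*(d11+d22)^2) by (apply Rmult_lt_0_compat; apply pow_lt; lra).
  clearbody a0 a1 a2 a3.
  destruct (quart_fact a3 a2 a1 a0) as [p [q [r [s [E3 [E2 [E1 E0]]]]]]].
  rewrite <- E3, <- E2, <- E1, <- E0. rewrite stable_iff.
  assert (Hh : a1*a2*a3 - a1^2 - a3^2*a0 = p*r*((q-s)^2 + (p+r)*(p*s+q*r))).
  { rewrite <- E3, <- E2, <- E1, <- E0. ring. }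
  split.
  - intros [Hp [Hq [Hr Hs]]].
    assert (0 < p*r*((q-s)^2 + (p+r)*(p*s+q*r))).
    { apply Rmult_lt_0_compat. apply Rmult_lt_0_compat; lra.
      assert (0 <= (q-s)^2) by (apply pow2_ge_0).
      assert (0 < (p+r)*(p*s+q*r)) by (apply Rmult_lt_0_compat; nra). lra. }
    assert (0 < Bnd eps d11 d12 d22 k11 k22 - nu^2) by nra. lra.
  - intro Hb.
    assert (HH : 0 < p*r*((q-s)^2 + (p+r)*(p*s+q*r))) by nra.
    assert (Hbr : 0 < (q-s)^2 + (p+r)*(p*s+q*r)).
    { rewrite E3, E1. assert (0 <= (q-s)^2) by (apply pow2_ge_0).
      assert (0 < a3*a1) by (apply Rmult_lt_0_compat; lra). lra. }
    assert (Hpr : 0 < p*r).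
    { destruct (Rlt_dec 0 (p*r)) as [h|h]; auto. exfalso. nra. }
    assert (0 < p /\ 0 < r) as [Hp Hr] by (split; nra).
    assert (0 < q /\ 0 < s) as [Hq Hs] by (split; nra).
    auto.
Qed.

Lemma peval_bq S P x y : peval [P;0;S;0;1] (mkC x y) =
  mkC ((x*x-y*y)^2 - (2*x*y)^2 + S*(x*x-y*y) + P) (2*(x*x-y*y)*(2*x*y) + S*(2*x*y)).
Proof. unfold peval, Cmul, Cadd, Cofr, C0; simpl. f_equal; ring. Qed.

Lemma peval_bqd S P x y : peval (pderiv [P;0;S;0;1]) (mkC x y) =
  mkC (2*S*x + 4*(x^3-3*x*y^2)) (2*S*y + 4*(3*x^2*y - y^3)).
Proof. unfold pderiv, pderiv_aux, peval, Cmul, Cadd, Cofr, C0; simpl. f_equal; ring. Qed.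

Lemma undamped S P : 0 < S -> 0 < P ->
  ((forall z, peval [P;0;S;0;1] z = C0 -> re z = 0 /\ peval (pderiv [P;0;S;0;1]) z <> C0)
   <-> 0 < S^2 - 4*P).
Proof.
  intros HS HP. split.
  - intro H. destruct (Rlt_dec 0 (S^2-4*P)) as [h|h]; auto. exfalso.
    destruct (Req_dec (S^2-4*P) 0) as [h0|h0].
    + assert (Hs: 0 <= S/2) by lra. pose proof (sqrt_sqrt _ Hs).
      set (y := sqrt (S/2)) in *. clearbody y.
      destruct (H (mkC 0 y)) as [_ Hd].
      * rewrite peval_bq. unfold C0. f_equal; nra.
      * apply Hd. rewrite peval_bqd. unfold C0. f_equal; nra.
    + assert (hn : S^2 - 4*P < 0) by lra.
      destruct (quart_fact 0 S 0 P) as [p [q [r [s [E3 [E2 [E1 E0]]]]]]].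
      assert (Hl : [P;0;S;0;1] = [q*s; p*s+q*r; q+s+p*r; p+r; 1]) by (rewrite E3, E2, E1, E0; reflexivity).
      destruct (Req_dec p 0) as [hp|hp].
      * assert (r = 0) by lra. subst p r. rewrite <- E2, <- E0 in hn. assert (0 <= (q-s)^2) by apply pow2_ge_0. nra.
      * assert (p < 0 \/ r < 0) as [hp'|hr'] by lra.
        -- destruct (quad_root p q) as [z [Hz1 [_ Hz3]]]; [lra|].
           destruct (H z) as [Hre _].
           ++ rewrite Hl, peval_fact, Hz1. destruct (quadC r s z). unfold Cmul, C0; simpl. f_equal; ring.
           ++ specialize (Hz3 hp'). lra.
        -- destruct (quad_root r s) as [z [Hz1 [_ Hz3]]]; [lra|].
           destruct (H z) as [Hre _].
           ++ rewrite Hl, peval_fact, Hz1. destruct (quadC p q z). unfold Cmul, C0; simpl. f_equal; ring.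
           ++ specialize (Hz3 hr'). lra.
  - intros Hd [x y] Hz. rewrite peval_bq in Hz. unfold C0 in Hz. injection Hz as H1 H2.
    set (u := x*x-y*y) in *. set (v := 2*x*y) in *.
    assert (Ev : v * (2*u+S) = 0) by lra.
    apply Rmult_integral in Ev. destruct Ev as [Ev|Ev].
    + rewrite Ev in H1.
      assert (Hx : x = 0).
      { unfold v in Ev. destruct (Req_dec x 0) as [hx|hx]; auto.
        assert (y = 0) by (apply (Rmult_eq_reg_l (2*x)); nra). subst y. exfalso.
        unfold u in H1. nra. }
      subst x. split; [reflexivity|].
      rewrite peval_bqd. unfold C0. intro Hc. injection Hc as _ Hc.
      unfold u in H1.
      assert (Hy : y <> 0) by (intro; subst y; nra).
      assert (E : 2*y*(S - 2*y^2) = 0) by nra.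
      apply Rmult_integral in E. destruct E as [E|E]. lra.
      assert (u = -S/2) by (unfold u; nra). unfold u in *. nra.
    + exfalso. assert (u = -S/2) by lra. rewrite H in H1. nra.
Qed.

Lemma lub_B eps d11 d12 d22 k11 k22 : 0<eps -> 0<k11 -> 0<k22 -> 0<d11 -> 0<d22 ->
  0<d11*d22-d12^2 ->
  is_lub (stab_set eps (mkM d11 d12 d12 d22) (Kmat k11 k22)) (Bnd eps d11 d12 d22 k11 k22).
Proof.
  intros He Hk1 Hk2 Hd1 Hd2 HD.
  assert (HB : 0 < Bnd eps d11 d12 d22 k11 k22).
  { unfold Bnd.
    assert (0 <= (k11-k22)^2*d11*d22/(d11+d22)^2).
    { unfold Rdiv. apply Rmult_le_pos. apply Rmult_le_pos. apply Rmult_le_pos. apply pow2_ge_0. lra. lra.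
      apply Rlt_le, Rinv_0_lt_compat, pow_lt; lra. }
    assert (0 < eps^2*(d11*d22-d12^2)*(d11*k22+d22*k11)/(d11+d22)).
    { unfold Rdiv. apply Rmult_lt_0_compat. apply Rmult_lt_0_compat. apply Rmult_lt_0_compat.
      apply pow_lt; lra. lra. nra. apply Rinv_0_lt_compat; lra. }
    lra. }
  split.
  - intros s [nu [-> Hs]]. rewrite stab_char in Hs; auto. lra.
  - intros b Hb. destruct (Rle_dec (Bnd eps d11 d12 d22 k11 k22) b) as [h|h]; auto. exfalso.
    set (m := Rmax 0 b). assert (0 <= m) by apply Rmax_l. assert (b <= m) by apply Rmax_r.
    assert (m < Bnd eps d11 d12 d22 k11 k22) by (unfold m; apply Rmax_lub_lt; lra).
    set (s' := (m + Bnd eps d11 d12 d22 k11 k22)/2).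
    assert (Hs0 : 0 <= s') by (unfold s'; lra).
    assert (Hin : stab_set eps (mkM d11 d12 d12 d22) (Kmat k11 k22) s').
    { exists (sqrt s'). assert (Eq : sqrt s' ^ 2 = s') by (simpl; rewrite Rmult_1_r; apply sqrt_sqrt; auto).
      split. auto. apply stab_char; auto. rewrite Eq. unfold s'. lra. }
    specialize (Hb _ Hin). unfold s' in Hb. lra.
Qed.

Theorem mainTheorem5 (k11 k22 d11 d12 d22 : R)
  (hk11 : 0 < k11) (hk22 : 0 < k22)
  (hD : sym_pos_def (mkM d11 d12 d12 d22)) :
  let K := Kmat k11 k22 in
  let D := mkM d11 d12 d12 d22 in
  let nu0sq := (k11 - k22) ^ 2 / 4 in
  let nucrsq := (k11 - k22) ^ 2 / 4
                - (d11 - d22) ^ 2 * (k11 - k22) ^ 2 / (4 * (d11 + d22) ^ 2) in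
  ((forall eps : R, 0 < eps -> exists s : R, is_lub (stab_set eps D K) s) /\
   (forall delta : R, 0 < delta -> exists eta : R, 0 < eta /\
      forall eps s : R, 0 < eps -> eps < eta -> is_lub (stab_set eps D K) s ->
        Rabs (s - nucrsq) < delta)) /\
  (nu0sq = (tr2 K / 2) ^ 2 - det2 K /\
   forall nu : R,
     ((forall z : Cplx, peval (charpoly 0 D K nu) z = C0 ->
         re z = 0 /\ peval (pderiv (charpoly 0 D K nu)) z <> C0)
      <-> nu ^ 2 < nu0sq)) /\
  (nu0sq - nucrsq =
     ((2 * tr2 (Mmul K D) - tr2 K * tr2 D) / (2 * tr2 D)) ^ 2 /\
   0 <= nu0sq - nucrsq).
Proof.
  intros K D nu0sq nucrsq. subst K D nu0sq nucrsq.
  destruct hD as [_ hD].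
  assert (Hd1 : 0 < d11) by (pose proof (hD 1 0 ltac:(left; lra)); simpl in *; nra).
  assert (Hd2 : 0 < d22) by (pose proof (hD 0 1 ltac:(right; lra)); simpl in *; nra).
  assert (HDt : 0 < d11*d22-d12^2).
  { pose proof (hD d12 (-d11) ltac:(right; lra)) as h; simpl in h.
    assert (E: d12 * (d11 * d12 + d12 * - d11) + - d11 * (d12 * d12 + d22 * - d11) = d11*(d11*d22-d12^2)) by ring.
    rewrite E in h. nra. }
  assert (Ht : 0 < d11 + d22) by lra.
  split; [split|split; [split|]].
  - intros eps He. eexists. apply lub_B; auto.
  - intros delta Hdel.
    set (c := (d11*d22-d12^2)*(d11*k22+d22*k11)/(d11+d22)).
    assert (Hc : 0 < c).
    { unfold c, Rdiv. apply Rmult_lt_0_compat. apply Rmult_lt_0_compat. lra. nra. apply Rinv_0_lt_compat; lra. }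
    exists (Rmin 1 (delta / c)). split.
    + apply Rmin_glb_lt. lra. unfold Rdiv. apply Rmult_lt_0_compat; auto. apply Rinv_0_lt_compat; auto.
    + intros eps s He Heta Hs.
      pose proof (is_lub_u _ _ _ Hs (lub_B eps d11 d12 d22 k11 k22 He hk11 hk22 Hd1 Hd2 HDt)) as ->.
      assert (E : Bnd eps d11 d12 d22 k11 k22 - ((k11 - k22) ^ 2 / 4 -
        (d11 - d22) ^ 2 * (k11 - k22) ^ 2 / (4 * (d11 + d22) ^ 2)) = eps^2 * c).
      { unfold Bnd, c. field. lra. }
      rewrite E.
      assert (h1 : eps < 1) by (eapply Rlt_le_trans; [exact Heta|apply Rmin_l]).
      assert (h2 : eps < delta / c) by (eapply Rlt_le_trans; [exact Heta|apply Rmin_r]).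
      assert (h3 : eps * c < delta).
      { apply (Rmult_lt_compat_r c) in h2; auto. unfold Rdiv in h2.
        rewrite Rmult_assoc, Rinv_l, Rmult_1_r in h2; lra. }
      rewrite Rabs_pos_eq.
      * assert (eps^2 * c <= eps * c) by (apply Rmult_le_compat_r; nra). lra.
      * apply Rmult_le_pos; [apply pow2_ge_0|lra].
  - unfold tr2, det2, Kmat; simpl. field.
  - intro nu. rewrite charpoly_eq.
    replace (0^2) with 0 by ring. rewrite !Rmult_0_l, Rplus_0_r.
    rewrite undamped by nra.
    assert (E : (k11+k22)^2 - 4*(k11*k22+nu^2) = 4*((k11-k22)^2/4 - nu^2)) by field.
    rewrite E. lra.
  - assert (E : (k11 - k22) ^ 2 / 4 - ((k11 - k22) ^ 2 / 4 -
        (d11 - d22) ^ 2 * (k11 - k22) ^ 2 / (4 * (d11 + d22) ^ 2)) =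
      ((2 * tr2 (Mmul (Kmat k11 k22) (mkM d11 d12 d12 d22)) - tr2 (Kmat k11 k22) * tr2 (mkM d11 d12 d12 d22)) /
       (2 * tr2 (mkM d11 d12 d12 d22))) ^ 2).
    { unfold tr2, Mmul, Kmat; simpl. field. lra. }
    split; [exact E|]. rewrite E. apply pow2_ge_0.
Qed.
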